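(* Let $\mathcal X$ be finite and $P_0,P_1,\hat P_0,\hat P_1$ distributions on $\mathcal X$ with full support. Consider the mismatched sequential probability ratio test with thresholds $\hat\gamma_0,\hat\gamma_1>0$: with $\hat S_n=\sum_{i=1}^n\log\frac{\hat P_0(x_i)}{\hat P_1(x_i)}$, stop at $\hat\tau=\inf\{n\ge1:\hat S_n\ge\hat\gamma_0\text{ or }\hat S_n\le-\hat\gamma_1\}$ and decide $0$ if $\hat S_{\hat\tau}\ge\hat\gamma_0$ and $1$ if $\hat S_{\hat\tau}\le-\hat\gamma_1$; let $\hat\epsilon_0$ (resp. $\hat\epsilon_1$) be the probability of deciding $1$ (resp. $0$) under i.i.d. $P_0$ (resp. $P_1$) observations. If $D(P_0\|\hat P_1)-D(P_0\|\hat P_0)<0$, then $\hat\epsilon_0\to1$ as $\hat\gamma_0,\hat\gamma_1\to\infty$. Similarly, if $D(P_1\|\hat P_0)-D(P_1\|\hat P_1)<0$, then $\hat\epsilon_1\to1$ as $\hat\gamma_0,\hat\gamma_1\to\infty$.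
   Context: $D$ is relative entropy; $P_0,P_1$ are the true distributions and $\hat P_0,\hat P_1$ those used in the test. *)

(* Defs.v *)
From HB Require Import structures.
From mathcomp Require Import all_boot all_order all_algebra.
From mathcomp Require Import all_classical all_reals all_analysis.
Set Implicit Arguments. Unset Strict Implicit. Unset Printing Implicit Defensive.
Import Order.TTheory GRing.Theory Num.Theory numFieldNormedType.Exports.
Local Open Scope ring_scope.

Definition full_pmf {R : realType} {X : finType} (p : {ffun X -> R}) : Prop :=
  (forall x, 0 < p x) /\ \sum_(x : X) p x = 1.

Definition KL {R : realType} {X : finType} (p q : {ffun X -> R}) : R :=
  \sum_(x : X) p x * ln (p x / q x).

Definition llr {R : realType} {X : finType} (Q0 Q1 : {ffun X -> R}) (x : X) : R :=
  ln (Q0 x / Q1 x).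

Definition Spart {R : realType} {X : finType} (Q0 Q1 : {ffun X -> R}) (n k : nat)
  (t : n.-tuple X) : R :=
  \sum_(i < n | (i < k)%N) llr Q0 Q1 (tnth t i).

(* The mismatched SPRT with thresholds g0 g1 stops exactly at time n
   (with observations t = x_1..x_n) and decides d. *)
Definition stop_decide {R : realType} {X : finType} (Q0 Q1 : {ffun X -> R})
  (g0 g1 : R) (d : bool) (n : nat) (t : n.-tuple X) : bool :=
  [&& (0 < n)%N,
      [forall k : 'I_n, (0 < k)%N ==>
          ((- g1 < Spart Q0 Q1 k t) && (Spart Q0 Q1 k t < g0))]
    & (if d then Spart Q0 Q1 n t <= - g1   (* d = true : decide 1 *)
       else g0 <= Spart Q0 Q1 n t)].       (* d = false: decide 0 *)

Definition prob_stop_decide {R : realType} {X : finType} (P Q0 Q1 : {ffun X -> R})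
  (g0 g1 : R) (d : bool) (n : nat) : R :=
  \sum_(t : n.-tuple X)
     (\prod_(i < n) P (tnth t i)) * (stop_decide Q0 Q1 g0 g1 d t)%:R.

Definition prob_decide {R : realType} {X : finType} (P Q0 Q1 : {ffun X -> R})
  (g0 g1 : R) (d : bool) : R :=
  limn (series (fun n : nat => prob_stop_decide P Q0 Q1 g0 g1 d n : R) : R^nat).

Definition eps0 {R : realType} {X : finType} (P0 Q0 Q1 : {ffun X -> R}) (g0 g1 : R) : R :=
  prob_decide P0 Q0 Q1 g0 g1 true.
Definition eps1 {R : realType} {X : finType} (P1 Q0 Q1 : {ffun X -> R}) (g0 g1 : R) : R :=
  prob_decide P1 Q0 Q1 g0 g1 false.

Definition tends_to_as_thresholds_grow {R : realType} (f : R -> R -> R) (l : R) : Prop :=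
  forall e : R, 0 < e -> exists M : R, forall g0 g1 : R,
    0 < g0 -> 0 < g1 -> M < g0 -> M < g1 -> `|f g0 g1 - l| < e.

(* Main.v *)
Require Import Defs.
From HB Require Import structures.
From mathcomp Require Import all_boot all_order all_algebra.
From mathcomp Require Import all_classical all_reals all_analysis.
From mathcomp Require Import lra ring.
Import Order.TTheory GRing.Theory Num.Theory.
Import numFieldNormedType.Exports.
Set Implicit Arguments. Unset Strict Implicit. Unset Printing Implicit Defensive.
Local Open Scope ring_scope.

Lemma sum_tuple0 (R : realType) (X : finType) (F : 0.-tuple X -> R) :
  \sum_(t : 0.-tuple X) F t = F [tuple].
Proof.
rewrite (eq_bigr (fun _ => F [tuple])); last by move=> t _; rewrite tuple0.
by rewrite sumr_const card_tuple expn0.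
Qed.

Lemma sum_tuple_cons (R : realType) (X : finType) n (F : n.+1.-tuple X -> R) :
  \sum_(t : n.+1.-tuple X) F t =
  \sum_(x : X) \sum_(t : n.-tuple X) F [tuple of x :: t].
Proof.
rewrite pair_big /=.
rewrite (reindex (fun p : X * n.-tuple X => [tuple of p.1 :: p.2])) //=.
exists (fun t : n.+1.-tuple X => (thead t, [tuple of behead t])).
  by move=> [x t] _ /=; rewrite theadE; congr pair; apply: val_inj.
by move=> t _; rewrite [RHS]tuple_eta; apply: val_inj.
Qed.

Lemma sum_prod_tuple (R : realType) (X : finType) n (F : X -> R) :
  \sum_(t : n.-tuple X) \prod_(y <- t) F y = (\sum_x F x) ^+ n.
Proof.
elim: n => [|n IH]; first by rewrite sum_tuple0 big_nil expr0.
rewrite sum_tuple_cons exprS big_distrl /=; apply: eq_bigr => x _.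
rewrite -IH big_distrr /=; apply: eq_bigr => t _.
by rewrite big_cons.
Qed.

Lemma marg (R : realType) (X : finType) (P : X -> R) :
  \sum_x P x = 1 ->
  forall N n (phi : seq X -> R), (n <= N)%N ->
  \sum_(t : N.-tuple X) (\prod_(y <- t) P y) * phi (take n t) =
  \sum_(s : n.-tuple X) (\prod_(y <- s) P y) * phi s.
Proof.
move=> P1; elim=> [|N IH] n phi.
  rewrite leqn0 => /eqP ->; apply: eq_bigr => t _.
  by rewrite tuple0 /=.
case: n => [|n] hn.
  rewrite sum_tuple0 big_nil mul1r.
  under eq_bigr do rewrite take0.
  by rewrite -big_distrl /= sum_prod_tuple P1 expr1n mul1r.
rewrite !sum_tuple_cons; apply: eq_bigr => x _ /=.
under eq_bigr do rewrite big_cons -mulrA.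
rewrite -big_distrr /=.
under [RHS]eq_bigr do rewrite big_cons -mulrA.
rewrite -[RHS]big_distrr /=; congr (_ * _).
exact: (IH n (fun s => phi (x :: s))).
Qed.

Definition Tk {R : realType} {X : finType} (f : X -> R) (k : nat) (s : seq X) : R :=
  \sum_(y <- take k s) f y.

Definition stopS {R : realType} {X : finType} (f : X -> R) (g0 g1 : R) (n : nat)
  (s : seq X) : bool :=
  [&& (0 < n)%N,
      [forall k : 'I_n, (0 < k)%N ==> ((- g1 < Tk f k s) && (Tk f k s < g0))]
    & Tk f n s <= - g1].

Lemma Spart_eq (R : realType) (X : finType) (Q0 Q1 : {ffun X -> R}) (x0 : X) n k
  (t : n.-tuple X) : (k <= n)%N -> Spart Q0 Q1 k t = Tk (llr Q0 Q1) k t.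
Proof.
move=> kn; rewrite /Spart /Tk.
under eq_bigr do rewrite (tnth_nth x0).
rewrite -(big_mkord (fun i => (i < k)%N) (fun i => llr Q0 Q1 (nth x0 t i))).
rewrite (eq_bigl (fun i => true && (i < k)%N)) // -big_nat_widen //.
rewrite (big_nth x0) size_take size_tuple.
have -> : (if (k < n)%N then k else n) = k.
  by case: ltnP => // nk; apply/eqP; rewrite eqn_leq kn nk.
by apply: eq_big_nat => i /andP[_ ik]; rewrite nth_take.
Qed.

Lemma stop_eq (R : realType) (X : finType) (Q0 Q1 : {ffun X -> R}) (x0 : X) g0 g1 n
  (t : n.-tuple X) :
  stop_decide Q0 Q1 g0 g1 true t = stopS (llr Q0 Q1) g0 g1 n t.
Proof.
rewrite /stop_decide /stopS (Spart_eq _ _ x0) //; congr [&& _, _ & _].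
by apply: eq_forallb => k; rewrite (Spart_eq _ _ x0) // ltnW.
Qed.

Lemma Tk_take (R : realType) (X : finType) (f : X -> R) k n s :
  (k <= n)%N -> Tk f k (take n s) = Tk f k s.
Proof. by move=> kn; rewrite /Tk take_takel. Qed.

Lemma stopS_take (R : realType) (X : finType) (f : X -> R) g0 g1 n s :
  stopS f g0 g1 n (take n s) = stopS f g0 g1 n s.
Proof.
rewrite /stopS Tk_take //; congr [&& _, _ & _].
by apply: eq_forallb => k; rewrite Tk_take // ltnW.
Qed.

Lemma stop_lt (R : realType) (X : finType) (f : X -> R) g0 g1 n m s :
  stopS f g0 g1 n s -> stopS f g0 g1 m s -> (m < n)%N -> False.
Proof.
move=> /and3P[_ /forallP H _] /and3P[m0 _ Hm] mn.
have /implyP /(_ m0) /andP[H1 _] := H (Ordinal mn).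
by move: Hm; rewrite leNgt H1.
Qed.

Lemma stop_upper (R : realType) (X : finType) (f : X -> R) (g0 g1 : R) (K : nat) (s : seq X) :
  \sum_(n < K) ((stopS f g0 g1 n s)%:R : R) <= 1.
Proof.
case: (pickP (fun n : 'I_K => stopS f g0 g1 n s)) => [n Hn|H].
  rewrite (bigD1 n) //= Hn big1 ?addr0 // => m /eqP mn.
  case Hm: (stopS f g0 g1 m s) => //.
  exfalso; case: (ltngtP n m) => nm.
  - exact: (stop_lt Hm Hn nm).
  - exact: (stop_lt Hn Hm nm).
  - by apply: mn; apply: val_inj.
by rewrite big1 // => m _; rewrite H.
Qed.

Lemma stop_lower (R : realType) (X : finType) (f : X -> R) (g0 g1 : R) (N : nat) (s : seq X) :
  0 < g0 -> 0 < g1 ->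
  1 - ((- g1 <= Tk f N s)%R%:R : R) - \sum_(k < N.+1) ((g0 <= Tk f k s)%R%:R : R)
  <= \sum_(n < N.+1) ((stopS f g0 g1 n s)%:R : R).
Proof.
move=> g0p g1p.
have S0 : 0 <= \sum_(n < N.+1) ((stopS f g0 g1 n s)%:R : R) by apply: sumr_ge0.
case HN: (- g1 <= Tk f N s).
  have : 0 <= \sum_(k < N.+1) ((g0 <= Tk f k s)%R%:R : R) by apply: sumr_ge0.
  rewrite /=; lra.
case: (pickP (fun k : 'I_N.+1 => g0 <= Tk f k s)) => [k Hk|Hg].
  have : 1 <= \sum_(k < N.+1) ((g0 <= Tk f k s)%R%:R : R).
    rewrite (bigD1 k) //= Hk mulr1n; have : 0 <= \sum_(i < N.+1 | i != k) ((g0 <= Tk f i s)%R%:R : R) by apply: sumr_ge0.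
    lra.
  rewrite /=; lra.
have HN' : Tk f N s <= - g1 by rewrite ltW // ltNge HN.
have ex : exists n, Tk f n s <= - g1 by exists N.
case: (ex_minnP ex) => n Hn Hmin.
have nN : (n <= N)%N by apply: Hmin.
have n0 : (0 < n)%N.
  rewrite lt0n; apply/negP => /eqP n0; move: Hn; rewrite n0 /Tk take0 big_nil.
  lra.
have Hs : stopS f g0 g1 n s.
  rewrite /stopS n0 Hn andbT /=; apply/forallP => k; apply/implyP => k0.
  apply/andP; split.
    rewrite ltNge; apply/negP => /Hmin; rewrite leqNgt ltn_ord //.
  have kN : (k < N.+1)%N by rewrite ltnS (leq_trans _ nN) // ltnW.
  by have := Hg (Ordinal kN); rewrite /= => /negbT; rewrite -ltNge.
have nN1 : (n < N.+1)%N by rewrite ltnS.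
rewrite [X in _ <= X](bigD1 (Ordinal nN1)) //= Hs mulr1n.
rewrite big1; last by move=> k _; have := Hg k; rewrite /= => ->.
have : 0 <= \sum_(i < N.+1 | i != Ordinal nN1) ((stopS f g0 g1 i s)%:R : R) by apply: sumr_ge0.
lra.
Qed.

Lemma core_mgf (R : realType) (X : finType) (P : X -> R) (f : X -> R) (th : R) k :
  \sum_(s : k.-tuple X) (\prod_(y <- s) P y) * expR (th * Tk f k s) =
  (\sum_x P x * expR (th * f x)) ^+ k.
Proof.
rewrite -sum_prod_tuple; apply: eq_bigr => s _.
rewrite /Tk take_oversize ?size_tuple // mulr_sumr expR_sum -big_split /=.
by [].
Qed.

Lemma ind_le_exp (R : realType) (th c T : R) :
  0 <= th -> ((c <= T)%R%:R : R) <= expR (th * T) * expR (- (th * c)).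
Proof.
move=> th0; rewrite -expRD.
case H: (c <= T)%R; last by apply/ltW/expR_gt0.
rewrite /= mulr1n -expR0 ler_expR -mulrBr; apply: mulr_ge0 => //.
by rewrite subr_ge0.
Qed.

Lemma chern (R : realType) (X : finType) (P : X -> R) (f : X -> R) (th c : R) k N :
  (forall x, 0 <= P x) -> \sum_x P x = 1 -> 0 <= th -> (k <= N)%N ->
  \sum_(t : N.-tuple X) (\prod_(y <- t) P y) * ((c <= Tk f k t)%R%:R : R)
  <= expR (- (th * c)) * (\sum_x P x * expR (th * f x)) ^+ k.
Proof.
move=> P0 P1 th0 kN.
have -> : \sum_(t : N.-tuple X) (\prod_(y <- t) P y) * ((c <= Tk f k t)%R%:R : R)
   = \sum_(t : k.-tuple X) (\prod_(y <- t) P y) * ((c <= Tk f k t)%R%:R : R).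
  rewrite -(marg P1 (fun s => ((c <= Tk f k s)%R%:R : R)) kN).
  by apply: eq_bigr => t _ /=; rewrite Tk_take.
rewrite -core_mgf mulr_sumr; apply: ler_sum => s _.
rewrite mulrCA; apply: ler_wpM2l; first by apply: prodr_ge0.
by rewrite mulrC; apply: ind_le_exp.
Qed.

Lemma prod_tnth (R : realType) (X : finType) n (F : X -> R) (t : n.-tuple X) :
  \prod_(i < n) F (tnth t i) = \prod_(y <- t) F y.
Proof. by rewrite big_tuple. Qed.

Lemma series_eq (R : realType) (X : finType) (P Q0 Q1 : {ffun X -> R}) (x0 : X) g0 g1 N :
  \sum_x P x = 1 ->
  series (fun n : nat => prob_stop_decide P Q0 Q1 g0 g1 true n) N.+1 =
  \sum_(t : N.-tuple X) (\prod_(y <- t) P y) *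
     \sum_(n < N.+1) ((stopS (llr Q0 Q1) g0 g1 n t)%:R : R).
Proof.
move=> P1; rewrite /series /= big_mkord.
transitivity (\sum_(n < N.+1) \sum_(t : N.-tuple X) (\prod_(y <- t) P y) *
     ((stopS (llr Q0 Q1) g0 g1 n t)%:R : R)).
  apply: eq_bigr => n _; rewrite /prob_stop_decide.
  under eq_bigr => t _ do rewrite (stop_eq _ _ x0) prod_tnth.
  have E := marg P1 (fun s => ((stopS (llr Q0 Q1) g0 g1 n s)%:R : R)) (ltnSE (ltn_ord n)).
  rewrite /= in E; rewrite -E.
  by apply: eq_bigr => t _; rewrite stopS_take.
rewrite exchange_big /=; apply: eq_bigr => t _.
by rewrite mulr_sumr.
Qed.

Lemma exp_quad (R : realType) (y : R) : y <= 1/2 -> expR y <= 1 + y + 2 * y ^+ 2.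
Proof.
move=> hy.
have h1 : 1 - y <= expR (- y) by have := expR_ge1Dx (- y); rewrite -[1 - y]/(1 + - y).
have hpos : 0 < 1 - y by lra.
have -> : expR y = (expR (- y))^-1 by rewrite expRN invrK.
apply: (le_trans (y := (1 - y)^-1)).
  by rewrite lef_pV2 // posrE // expR_gt0.
rewrite -[(1 - y)^-1]mul1r ler_pdivrMr //.
have : 0 <= y ^+ 2 * (1 - 2 * y) by apply: mulr_ge0; [exact: sqr_ge0 | lra].
have -> : (1 + y + 2 * y ^+ 2) * (1 - y) = 1 + y ^+ 2 * (1 - 2 * y) by ring.
lra.
Qed.

Lemma bernoulli_ineq (R : realType) (h : R) n : 0 <= h -> 1 + n%:R * h <= (1 + h) ^+ n.
Proof.
move=> h0; elim: n => [|n IH]; first by rewrite mul0r addr0 expr0.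
rewrite exprS -natr1.
have : 0 <= n%:R * h * h by apply: mulr_ge0 => //; apply: mulr_ge0.
have : (1 + h) * (1 + n%:R * h) <= (1 + h) * (1 + h) ^+ n.
  by apply: ler_wpM2l => //; lra.
have -> : (1 + h) * (1 + n%:R * h) = 1 + (n%:R + 1) * h + n%:R * h * h by ring.
lra.
Qed.

Lemma pow_small (R : realType) (r K e : R) : 0 <= r -> r < 1 -> 0 < e ->
  exists N : nat, K * r ^+ N < e.
Proof.
move=> r0 r1 e0.
have [->|rp] := eqVneq r 0.
  by exists 1%N; rewrite expr1 mulr0.
have rpos : 0 < r by rewrite lt0r rp.
set h := r^-1 - 1.
have hpos : 0 < h.
  rewrite /h subr_gt0 -[1]invr1 ltf_pV2 ?posrE //.
set K' := `|K|.
have K0 : 0 <= K' by apply: normr_ge0.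
have x0 : 0 <= K' / (e * h) by apply: divr_ge0 => //; apply/ltW/mulr_gt0.
exists (Num.bound (K' / (e * h))).
set N := Num.bound _.
have HN := archi_boundP x0; rewrite -/N in HN.
have B := bernoulli_ineq N (ltW hpos).
move: B; have -> : 1 + h = r^-1 by rewrite /h; ring.
rewrite exprVn => B.
have rNpos : 0 < r ^+ N by apply: exprn_gt0.
have : r ^+ N * (1 + N%:R * h) <= 1.
  by rewrite -[X in _ <= X](mulfV (lt0r_neq0 rNpos)); exact: (ler_wpM2l (ltW rNpos) B).
have : K' < N%:R * (e * h).
  by move: HN; rewrite ltr_pdivrMr //; apply: mulr_gt0.
have : K * r ^+ N <= K' * r ^+ N by apply: ler_wpM2r; [exact: ltW | exact: ler_norm].
move=> H1 H2 H3.
have H4 : N%:R * h * r ^+ N <= 1 by nra.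
nra.
Qed.

Lemma geom_bound (R : realType) (r : R) n : 0 <= r -> r < 1 ->
  \sum_(k < n) r ^+ k <= (1 - r)^-1.
Proof.
move=> r0 r1.
have hp : 0 < 1 - r by lra.
rewrite -[(1 - r)^-1]mul1r ler_pdivlMr //.
have E := subrX1 r n.
have : 0 <= r ^+ n by apply: exprn_ge0.
have -> : (\sum_(k < n) r ^+ k) * (1 - r) = 1 - r ^+ n.
  have -> : 1 - r = - (r - 1) by ring.
  by rewrite mulrN mulrC -E; ring.
lra.
Qed.

Lemma theta_exists (R : realType) (X : finType) (P f : X -> R) :
  (forall x, 0 <= P x) -> \sum_x P x = 1 -> \sum_x P x * f x < 0 ->
  exists th : R, 0 < th /\ \sum_x P x * expR (th * f x) < 1.
Proof.
move=> P0 P1 mu0.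
set mu := \sum_x P x * f x in mu0.
set V := \sum_x P x * f x ^+ 2.
set B := \sum_x `|f x|.
have V0 : 0 <= V by apply: sumr_ge0 => x _; apply: mulr_ge0 => //; exact: sqr_ge0.
have B0 : 0 <= B by apply: sumr_ge0 => x _; exact: normr_ge0.
have fB : forall x, f x <= B.
  move=> x; apply: (le_trans (ler_norm (f x))).
  rewrite /B (bigD1 x) //= lerDl; apply: sumr_ge0 => y _; exact: normr_ge0.
have mB : 0 <= (- mu) * B by apply: mulr_ge0 => //; lra.
set c := 4 * V + 2 * ((- mu) * B) + 1.
have c0 : 0 < c by rewrite /c; lra.
set th := - mu / c.
have th0 : 0 < th by apply: divr_gt0 => //; lra.
have thc : th * c = - mu by rewrite /th divfK // gt_eqF.
have H1 : th * (4 * V) <= th * c by apply: ler_wpM2l; [exact: ltW | rewrite /c; lra].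
have H2 : th * (2 * ((- mu) * B)) <= th * c by apply: ler_wpM2l; [exact: ltW | rewrite /c; lra].
have thB : th * B <= 1/2.
  have : (- mu) * (2 * (th * B)) <= (- mu) * 1.
    by rewrite mulr1 -thc; move: H2; rewrite -thc; nra.
  rewrite ler_pM2l; last by lra.
  lra.
exists th; split => //.
have step : \sum_x P x * expR (th * f x) <= \sum_x P x * (1 + th * f x + 2 * (th * f x) ^+ 2).
  apply: ler_sum => x _; apply: ler_wpM2l => //; apply: exp_quad.
  apply: (le_trans _ thB); apply: ler_wpM2l; [exact: ltW | exact: fB].
have eq : \sum_x P x * (1 + th * f x + 2 * (th * f x) ^+ 2) = \sum_x P x + th * mu + (2 * th ^+ 2) * V.
  rewrite /mu /V mulr_sumr mulr_sumr -!big_split /=.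
  by apply: eq_bigr => x _; ring.
rewrite eq P1 in step.
have : (2 * th ^+ 2) * V <= th * (- mu) / 2.
  rewrite -thc; nra.
nra.
Qed.

Lemma mu_eq (R : realType) (X : finType) (P Q0 Q1 : {ffun X -> R}) :
  (forall x, 0 < P x) -> (forall x, 0 < Q0 x) -> (forall x, 0 < Q1 x) ->
  \sum_x P x * llr Q0 Q1 x = KL P Q1 - KL P Q0.
Proof.
move=> Pp Q0p Q1p; rewrite /KL -sumrB; apply: eq_bigr => x _.
rewrite /llr !ln_div ?posrE //; ring.
Qed.

Lemma prob_ge0 (R : realType) (X : finType) (P Q0 Q1 : {ffun X -> R}) g0 g1 d n :
  (forall x, 0 <= P x) -> 0 <= prob_stop_decide P Q0 Q1 g0 g1 d n.
Proof.
move=> P0; apply: sumr_ge0 => t _; apply: mulr_ge0 => //.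
by apply: prodr_ge0.
Qed.

Lemma main0 (R : realType) (X : finType) (P Q0 Q1 : {ffun X -> R}) :
  (forall x, 0 < P x) -> \sum_x P x = 1 -> (forall x, 0 < Q0 x) -> (forall x, 0 < Q1 x) ->
  KL P Q1 - KL P Q0 < 0 -> tends_to_as_thresholds_grow (eps0 P Q0 Q1) 1.
Proof.
move=> Pp P1 Q0p Q1p hKL.
have P0 : forall x, 0 <= P x by move=> x; exact: ltW.
have [x0 _ | Hx] := pickP (fun _ : X => true); last first.
  exfalso; move: P1; rewrite big1 => [/eqP|i _]; first by rewrite eq_sym oner_eq0.
  by have := Hx i.
set f := llr Q0 Q1.
have mu0 : \sum_x P x * f x < 0 by rewrite /f mu_eq.
have [th [th0 rho1]] := theta_exists P0 P1 mu0.
set rho := \sum_x P x * expR (th * f x) in rho1.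
have rho0 : 0 <= rho by apply: sumr_ge0 => x _; apply: mulr_ge0 => //; exact/ltW/expR_gt0.
move=> e e0.
have r1 : 0 < 1 - rho by lra.
have den : 0 < e * th * (1 - rho) by apply: mulr_gt0 => //; apply: mulr_gt0.
exists (2 / (e * th * (1 - rho))) => g0 g1 g0p g1p g0M _.
set u := series (fun n : nat => prob_stop_decide P Q0 Q1 g0 g1 true n).
have ub : forall n, u n <= 1.
  case=> [|N]; first by rewrite /u /series /= big_geq.
  rewrite /u (series_eq _ _ x0) //.
  apply: (le_trans (y := \sum_(t : N.-tuple X) \prod_(y <- t) P y)); last first.
    by rewrite sum_prod_tuple P1 expr1n.
  apply: ler_sum => t _; rewrite -[X in _ <= X]mulr1.
  by apply: ler_wpM2l; [exact: prodr_ge0 | exact: stop_upper].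
have und : nondecreasing_seq u.
  by apply: (@nondecreasing_series _ _ xpredT 0) => n _ _; exact: prob_ge0.
have ucv : cvgn u.
  apply: nondecreasing_is_cvgn => //; exists 1 => _ [n _ <-]; exact: ub.
have epsE : eps0 P Q0 Q1 g0 g1 = limn u by [].
have eps_le1 : eps0 P Q0 Q1 g0 g1 <= 1.
  by rewrite epsE; apply: limr_le => //; apply: nearW => n; exact: ub.
have e2 : 0 < e / 2 by lra.
have [N HN] := pow_small (expR (th * g1)) rho0 rho1 e2.
set K := expR (th * g1) in HN.
set a := expR (- (th * g0)).
set G := \sum_(k < N.+1) rho ^+ k.
have a0 : 0 < a by apply: expR_gt0.
have G0 : 0 <= G by apply: sumr_ge0 => k _; exact: exprn_ge0.
have hG : G * (1 - rho) <= 1.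
  by have := geom_bound N.+1 rho0 rho1; rewrite -[(1 - rho)^-1]mul1r ler_pdivlMr.
have low : 1 - K * rho ^+ N - a * G <= u N.+1.
  rewrite /u (series_eq _ _ x0) //.
  apply: (le_trans (y := \sum_(t : N.-tuple X) (\prod_(y <- t) P y) *
     (1 - ((- g1 <= Tk f N t)%R%:R : R) - \sum_(k < N.+1) ((g0 <= Tk f k t)%R%:R : R)))); last first.
    apply: ler_sum => t _; apply: ler_wpM2l; first exact: prodr_ge0.
    exact: stop_lower.
  under eq_bigr => t _ do rewrite mulrBr mulrBr mulr1 mulr_sumr.
  rewrite !sumrB exchange_big /= sum_prod_tuple P1 expr1n.
  have hA := chern f (- g1) P0 P1 (ltW th0) (leqnn N).
  rewrite mulrN opprK -/K -/rho in hA.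
  have hB : \sum_(k < N.+1) \sum_(t : N.-tuple X) (\prod_(y <- t) P y) * ((g0 <= Tk f k t)%R%:R : R)
      <= a * G.
    rewrite /G mulr_sumr; apply: ler_sum => k _.
    exact: (chern f g0 P0 P1 (ltW th0) (ltnSE (ltn_ord k))).
  lra.
have eps_low : u N.+1 <= eps0 P Q0 Q1 g0 g1.
  by rewrite epsE; apply: nondecreasing_cvgn_le.
have hL : 2 < e * (1 - rho) * (th * g0).
  have : 2 / (e * th * (1 - rho)) * (e * th * (1 - rho)) < g0 * (e * th * (1 - rho)).
    by rewrite ltr_pM2r.
  rewrite divfK ?gt_eqF //.
  have -> : g0 * (e * th * (1 - rho)) = e * (1 - rho) * (th * g0) by ring.
  by [].
set Z := expR (th * g0).
have aZ : a * Z = 1 by rewrite /a /Z -expRD addNr expR0.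
have hZ : th * g0 < Z.
  have := expR_ge1Dx (th * g0); rewrite -/Z; lra.
have ea : 2 * a < e * (1 - rho).
  have e1 : 0 < e * (1 - rho) by apply: mulr_gt0.
  have : 2 < e * (1 - rho) * Z.
    apply: (lt_trans hL); rewrite ltr_pM2l //.
  move=> H; have : a * 2 < a * (e * (1 - rho) * Z) by rewrite ltr_pM2l.
  have -> : a * (e * (1 - rho) * Z) = e * (1 - rho) * (a * Z) by ring.
  rewrite aZ mulr1; lra.
have aG : a * G < e / 2.
  have H1 : a * G * (1 - rho) <= a.
    by rewrite -mulrA -[X in _ <= X]mulr1; apply: ler_wpM2l; [exact: ltW | exact: hG].
  have : a * G * (1 - rho) < e / 2 * (1 - rho) by lra.
  by rewrite ltr_pM2r.
have -> : `|eps0 P Q0 Q1 g0 g1 - 1| = 1 - eps0 P Q0 Q1 g0 g1.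
  by rewrite ler0_norm ?opprB //; lra.
lra.
Qed.

Lemma eps1_swap (R : realType) (X : finType) (P Q0 Q1 : {ffun X -> R}) g0 g1 :
  (forall x, 0 < Q0 x) -> (forall x, 0 < Q1 x) ->
  eps1 P Q0 Q1 g0 g1 = eps0 P Q1 Q0 g1 g0.
Proof.
move=> Q0p Q1p.
have hl : forall x, llr Q1 Q0 x = - llr Q0 Q1 x.
  move=> x; rewrite /llr -invf_div lnV // posrE divr_gt0 //.
have hS : forall n k (t : n.-tuple X), Spart Q1 Q0 k t = - Spart Q0 Q1 k t.
  by move=> n k t; rewrite /Spart -sumrN; apply: eq_bigr => i _; rewrite hl.
rewrite /eps1 /eps0 /prob_decide.
suff -> : (fun n : nat => prob_stop_decide P Q0 Q1 g0 g1 false n) =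
          (fun n : nat => prob_stop_decide P Q1 Q0 g1 g0 true n) by [].
apply/funext => n; rewrite /prob_stop_decide; apply: eq_bigr => t _.
congr (_ * (_ : bool)%:R); rewrite /stop_decide.
rewrite hS lerN2; congr [&& _, _ & _].
apply: eq_forallb => k; rewrite hS ltrN2 ltrNl.
by rewrite andbC.
Qed.

Unset Implicit Arguments.

(* Q0, Q1 are the mismatched distributions hat P_0, hat P_1 used by the test. *)
Theorem theorem7 (R : realType) (X : finType) (P0 P1 Q0 Q1 : {ffun X -> R}) :
  full_pmf P0 -> full_pmf P1 -> full_pmf Q0 -> full_pmf Q1 ->
  (KL P0 Q1 - KL P0 Q0 < 0 ->
     tends_to_as_thresholds_grow (eps0 P0 Q0 Q1) 1) /\
  (KL P1 Q0 - KL P1 Q1 < 0 ->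
     tends_to_as_thresholds_grow (eps1 P1 Q0 Q1) 1).
Proof.
move=> [P0p P0s] [P1p P1s] [Q0p _] [Q1p _]; split.
  by move=> h; apply: main0.
move=> h e e0.
have [M HM] := main0 P1p P1s Q1p Q0p h e0.
exists M => g0 g1 g0p g1p g0M g1M.
rewrite eps1_swap //; exact: HM.
Qed.
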